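(* Let $k$ be an algebraically closed field and $\underline{x},\underline{y}$ sequences of positive integers, and let $C_n=C_n(\underline{x},\underline{y})$ be the Cartan matrix of $A_n(\underline{x},\underline{y})$. Then for $m\geq1$, $$C_{2m}= C_{2m-1}\begin{pmatrix} 1 & y_m \\ 0 & 1 \end{pmatrix} = \begin{pmatrix} F_{2m-1}(\underline{y},S\underline{x}) & F_{2m}(\underline{y},S\underline{x}) \\ F_{2m}(\underline{x},\underline{y}) & F_{2m+1}(\underline{x},\underline{y}) \end{pmatrix},$$ and for $m\geq 0$ (with $C_0$ the identity matrix) $$C_{2m+1}=C_{2m}\begin{pmatrix} 1 & 0 \\ x_{m+1} & 1 \end{pmatrix} = \begin{pmatrix} F_{2m+1}(\underline{y},S\underline{x}) & F_{2m}(\underline{y},S\underline{x})\\ F_{2m+2}(\underline{x},\underline{y}) & F_{2m+1}(\underline{x},\underline{y}) \end{pmatrix}.$$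
   Context: Paths are composed right to left: for arrows $\rho,\sigma$, $\rho\sigma$ denotes the path $\sigma$ followed by $\rho$. For sequences of positive integers $\underline{x}=(x_1,x_2,\dots)$, $\underline{y}=(y_1,y_2,\dots)$ and $n\geq0$, $A_n(\underline{x},\underline{y})$ is the quotient of the path algebra of the quiver with vertices $1,2$, arrows $\alpha_{i,j}:1\to2$ ($1\le i\le\lfloor\frac{n+1}{2}\rfloor$, $1\le j\le x_i$) and arrows $\beta_{i,j}:2\to1$ ($1\le i\le\lfloor\frac n2\rfloor$, $1\le j\le y_i$), by the ideal generated by $\alpha_{i,j}\beta_{i',j'}$ for $i'<i$ and $\beta_{i',j'}\alpha_{i,j}$ for $i\le i'$ (all admissible $j,j'$). With $e_1,e_2$ the trivial paths, the Cartan matrix is $C_n(\underline{x},\underline{y})=(c_{ij})$, $c_{ij}=\dim_k e_iA_n(\underline{x},\underline{y})e_j$ (the number of nonzero paths from $j$ to $i$). For sequences $\underline{u},\underline{v}$, the generalized Fibonacci numbers are $F_0(\underline{u},\underline{v})=0$, $F_1(\underline{u},\underline{v})=1$, $F_{2m}(\underline{u},\underline{v})=F_{2m-2}(\underline{u},\underline{v})+F_{2m-1}(\underline{u},\underline{v})u_m$, $F_{2m+1}(\underline{u},\underline{v})=F_{2m-1}(\underline{u},\underline{v})+F_{2m}(\underline{u},\underline{v})v_m$ for $m\geq1$. $S\underline{x}=(x_2,x_3,\dots)$ is the shift. *)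

(* Defs.v *)
From mathcomp Require Import all_boot all_order all_algebra.
Set Implicit Arguments. Unset Strict Implicit. Unset Printing Implicit Defensive.
Import GRing.Theory.

(* Sequences of positive integers are functions nat -> nat, 1-indexed:
   x_i = x i for i >= 1 (x 0 is unused). *)

Definition shiftS (x : nat -> nat) : nat -> nat := fun i => x i.+1.

(* Generalized Fibonacci numbers: fib2 u v k = (F_k, F_{k+1}). *)
Fixpoint fib2 (u v : nat -> nat) (k : nat) : nat * nat :=
  match k with
  | 0 => (0, 1)
  | k'.+1 =>
      let: (a, b) := fib2 u v k' in
      (b, a + b * (if odd k'.+2 then v (k'.+2)./2 else u (k'.+2)./2))
  end.

Definition Fib (k : nat) (u v : nat -> nat) : nat := (fib2 u v k).1.

(* Arrows of the quiver of A_n(x,y): (true, i, j) = alpha_{i,j} : 1 -> 2,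
   (false, i, j) = beta_{i,j} : 2 -> 1. *)
Definition arrow := (bool * nat * nat)%type.

Definition valid_arrow (n : nat) (x y : nat -> nat) (a : arrow) : bool :=
  let: (b, i, j) := a in
  if b then [&& 1 <= i, i <= n.+1./2, 1 <= j & j <= x i]
  else [&& 1 <= i, i <= n./2, 1 <= j & j <= y i].

Definition src (a : arrow) : nat := if a.1.1 then 1 else 2.
Definition tgt (a : arrow) : nat := if a.1.1 then 2 else 1.

(* [ok a b]: the path "a followed by b" (i.e. the product b a, composed
   right to left) is composable and is not one of the generating relations
   alpha_{i,j} beta_{i',j'} (i' < i) or beta_{i',j'} alpha_{i,j} (i <= i'). *)
Definition ok (a b : arrow) : bool :=
  (tgt a == src b) &&
  (if a.1.1 then ~~ (a.1.2 <= b.1.2)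
   else ~~ (a.1.2 < b.1.2)).

Fixpoint ok_chain (a : arrow) (p : seq arrow) : bool :=
  match p with
  | [::] => true
  | b :: p' => ok a b && ok_chain b p'
  end.

(* A path is a list of arrows in traversal order (first arrow first).
   [nonzero_path n x y s t p]: p is a path from vertex s to vertex t of the
   quiver of A_n(x,y) that is nonzero in A_n(x,y), i.e. contains no
   generator of the (monomial) ideal as a subpath.  The empty list is the
   trivial path e_s (requires s = t). *)
Definition nonzero_path (n : nat) (x y : nat -> nat) (s t : nat)
  (p : seq arrow) : bool :=
  all (valid_arrow n x y) p &&
  match p with
  | [::] => (s == t) && ((s == 1) || (s == 2))
  | a :: p' => (src a == s) && (tgt (last a p') == t) && ok_chain a p'
  end.

Definition has_card (P : pred (seq arrow)) (N : nat) : Prop :=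
  exists s : seq (seq arrow), [/\ uniq s, forall p, (p \in s) = P p & size s = N].

Definition vtx (k : 'I_2) : nat := k.+1.

(* C is the Cartan matrix of A_n(x,y): c_{ij} = dim e_i A e_j = number of
   nonzero paths from j to i. *)
Definition is_cartan (n : nat) (x y : nat -> nat) (C : 'M[nat]_2) : Prop :=
  forall i j : 'I_2, has_card (nonzero_path n x y (vtx j) (vtx i)) (C i j).

Definition mx2 (a b c d : nat) : 'M[nat]_2 :=
  \matrix_(i < 2, j < 2)
    if (i == 0 :> nat) then (if (j == 0 :> nat) then a else b)
    else (if (j == 0 :> nat) then c else d).

(* Main.v *)
Require Import Defs.
From mathcomp Require Import all_boot all_order all_algebra.
From mathcomp Require Import zify.
Set Implicit Arguments. Unset Strict Implicit. Unset Printing Implicit Defensive.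

Lemma valid_mono n x y a : valid_arrow n x y a -> valid_arrow n.+1 x y a.
Proof. case: a => [[[] i] j] /=; lia. Qed.

Lemma ok_valid n x y a b : valid_arrow n.+1 x y a -> valid_arrow n.+1 x y b -> ok a b -> valid_arrow n x y b.
Proof. case: a => [[[] i] j]; case: b => [[[] i'] j'] /=; rewrite /ok /src /tgt /=; lia. Qed.

Lemma ok_new n x y a b : valid_arrow n.+1 x y a -> ~~ valid_arrow n x y a -> valid_arrow n x y b -> ok a b = (tgt a == src b).
Proof. case: a => [[[] i] j]; case: b => [[[] i'] j'] /=; rewrite /ok /src /tgt /=; lia. Qed.

Lemma tail_valid n x y q a : valid_arrow n.+1 x y a -> ok_chain a q -> all (valid_arrow n.+1 x y) q -> all (valid_arrow n x y) q.
Proof.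
elim: q a => [//|b q IH] a Ha /= /andP[Hab Hq] /andP[Hb Hqa].
rewrite (ok_valid Ha Hb Hab) /=. exact: IH Hb Hq Hqa.
Qed.

Definition newA (x y : nat -> nat) n : seq arrow :=
  if odd n then [seq (false, n.+1./2, j) | j <- iota 1 (y n.+1./2)]
  else [seq (true, n./2.+1, j) | j <- iota 1 (x n./2.+1)].

Lemma mem_mapj (b0 : bool) (i0 : nat) (s : seq nat) (b : bool) (i j : nat) :
  ((b,i,j) \in [seq (b0,i0,j) | j <- s]) = [&& b == b0, i == i0 & j \in s].
Proof.
apply/mapP/and3P => [[j' Hj [-> -> ->]]|[/eqP-> /eqP-> Hj]]; first by rewrite !eqxx.
by exists j.
Qed.

Lemma mem_newA x y n a : (a \in newA x y n) = valid_arrow n.+1 x y a && ~~ valid_arrow n x y a.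
Proof.
case: a => [[b i] j]; rewrite /newA; case: ifP => Ho; rewrite mem_mapj mem_iota;
case: b => /=; try lia.
all: first [case: (eqVneq i (uphalf n)) => [->|?]; lia | case: (eqVneq i n./2.+1) => [->|?]; lia].
Qed.

Lemma all_mono n x y q : all (valid_arrow n x y) q -> all (valid_arrow n.+1 x y) q.
Proof. apply: sub_all => a; exact: valid_mono. Qed.

Lemma nz_step n x y s t p :
  nonzero_path n.+1 x y s t p =
  nonzero_path n x y s t p ||
  (if p is a :: q then (a \in newA x y n) && (src a == s) && nonzero_path n x y (tgt a) t q
   else false).
Proof.
case: p => [|a q]; first by rewrite /nonzero_path /= orbF.
rewrite mem_newA /nonzero_path /=.
case Hn: (valid_arrow n x y a) => /=.
  rewrite (valid_mono Hn) /= orbF.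
  case Hc: (ok_chain a q); last by rewrite !andbF.
  have -> : all (valid_arrow n.+1 x y) q = all (valid_arrow n x y) q.
    by apply/idP/idP => H; [exact: tail_valid (valid_mono Hn) Hc H | exact: all_mono].
  by [].
case Ha: (valid_arrow n.+1 x y a) => //=.
case: q => [|b q] /=.
  rewrite !andbT; have: (tgt a == 1) || (tgt a == 2) by rewrite /tgt; case: ifP.
  by case: (tgt a == 1); case: (tgt a == 2); case: (src a == s); case: (tgt a == t).
case Hb: (valid_arrow n x y b).
  rewrite (ok_new Ha (negbT Hn) Hb) (valid_mono Hb) /=.
  case Hc: (ok_chain b q); last by rewrite !andbF.
  have -> : all (valid_arrow n.+1 x y) q = all (valid_arrow n x y) q.
    by apply/idP/idP => H; [exact: tail_valid (valid_mono Hb) Hc H | exact: all_mono].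
  rewrite [src b == _]eq_sym.
  by case: (all _ q); case: (src a == s); case: (tgt a == src b); case: (tgt _ == t).
rewrite /= andbF.
case Hb1: (valid_arrow n.+1 x y b) => //=.
case Hok: (ok a b); last by rewrite !andbF.
by rewrite (ok_valid Ha Hb1 Hok) in Hb.
Qed.

Lemma mem_consall (A : seq arrow) (L : seq (seq arrow)) p :
  (p \in [seq a :: q | a <- A, q <- L]) = (if p is a :: q then (a \in A) && (q \in L) else false).
Proof.
case: p => [|a q].
  by apply/negbTE/negP => /allpairsPdep [? [? [_ _ //]]].
apply/allpairsPdep/andP => [[a' [q' [Ha Hq [-> ->]]]] | [Ha Hq]]; first by split.
by exists a, q.
Qed.

Definition srcN n := if odd n then 2 else 1.
Definition tgtN n := if odd n then 1 else 2.

Fixpoint cnt x y n s t : nat :=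
  match n with
  | 0 => (s == t : nat)
  | n'.+1 => cnt x y n' s t +
      (if s == srcN n' then size (newA x y n') * cnt x y n' (tgtN n') t else 0)
  end.

Lemma newA_st x y n a : a \in newA x y n -> src a = srcN n /\ tgt a = tgtN n.
Proof. by rewrite /newA /srcN /tgtN; case: ifP => _ /mapP [j _ ->]. Qed.

Lemma newA_uniq x y n : uniq (newA x y n).
Proof.
rewrite /newA; case: ifP => _; rewrite map_inj_uniq ?iota_uniq // => i j [].
  by []. by [].
Qed.

Lemma size_newA x y n : size (newA x y n) = if odd n then y n.+1./2 else x n./2.+1.
Proof. by rewrite /newA; case: ifP => _; rewrite size_map size_iota. Qed.

Lemma vtx12 s : (s == 1) || (s == 2) -> s = 1 \/ s = 2.
Proof. by case/orP => /eqP ->; [left|right]. Qed.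

Lemma cnt_ok x y n s t : (s == 1) || (s == 2) -> (t == 1) || (t == 2) ->
  has_card (nonzero_path n x y s t) (cnt x y n s t).
Proof.
elim: n s t => [|n IH] s t Hs Ht.
  exists (if s == t then [:: [::]] else [::]); split.
  - by case: ifP.
  - case=> [|a q].
      by rewrite /nonzero_path /= Hs andbT; case: ifP.
    rewrite /nonzero_path /=.
    have -> : valid_arrow 0 x y a = false by case: a => [[[] i] j] /=; lia.
    by case: ifP.
  - by rewrite /=; case: ifP.
have [L1 [U1 M1 S1]] := IH s t Hs Ht.
have Htg : (tgtN n == 1) || (tgtN n == 2) by rewrite /tgtN; case: ifP.
have [L2 [U2 M2 S2]] := IH (tgtN n) t Htg Ht.
rewrite /=.
case: (eqVneq s (srcN n)) => Hsn.
  exists (L1 ++ [seq a :: q | a <- newA x y n, q <- L2]); split.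
  - rewrite cat_uniq U1 /=; apply/andP; split.
      apply/hasPn => p; rewrite mem_consall M1; case: p => [//|a q] /andP [Ha _].
      rewrite /nonzero_path /=; move: Ha; rewrite mem_newA => /andP [_ /negbTE ->].
      by [].
    apply: allpairs_uniq => //; first exact: newA_uniq.
    by move=> [a1 q1] [a2 q2] _ _ /= [-> ->].
  - move=> p; rewrite nz_step mem_cat M1 mem_consall; congr (_ || _).
    case: p => [//|a q]; case Ha: (a \in newA x y n) => //=.
    have [-> ->] := newA_st Ha; by rewrite M2 Hsn eqxx.
  - by rewrite size_cat S1 size_allpairs S2.
exists L1; split => //; last by rewrite addn0.
move=> p; rewrite nz_step M1; case: p => [|a q]; first by rewrite orbF.
case Ha: (a \in newA x y n) => /=; last by rewrite orbF.
have [-> _] := newA_st Ha. by rewrite eq_sym (negbTE Hsn) orbF.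
Qed.

Lemma has_card_uniq P N M : has_card P N -> has_card P M -> N = M.
Proof.
move=> [s1 [U1 M1 <-]] [s2 [U2 M2 <-]]; apply: perm_size; apply: uniq_perm => // p.
by rewrite M1 M2.
Qed.

Lemma cntS x y n s t : cnt x y n.+1 s t = cnt x y n s t +
      (if s == srcN n then size (newA x y n) * cnt x y n (tgtN n) t else 0).
Proof. by []. Qed.

Arguments cnt : simpl never.

Definition CM x y n : 'M[nat]_2 := \matrix_(i, j) cnt x y n (vtx j) (vtx i).

Lemma vtx_ok (k : 'I_2) : (vtx k == 1) || (vtx k == 2).
Proof. by case: k => [[|[|]]]. Qed.

Lemma cartan_eq x y n C : is_cartan n x y C -> C = CM x y n.
Proof.
move=> H; apply/matrixP => i j; rewrite mxE.
exact: has_card_uniq (H i j) (cnt_ok x y n (vtx_ok j) (vtx_ok i)).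
Qed.

Lemma CM_cartan x y n : is_cartan n x y (CM x y n).
Proof. move=> i j; rewrite mxE; exact: cnt_ok (vtx_ok j) (vtx_ok i). Qed.

Lemma fib_rec k u v : Fib k.+2 u v = Fib k u v + Fib k.+1 u v * (if odd k then v k.+2./2 else u k.+2./2).
Proof. by rewrite /Fib /=; case: (fib2 u v k) => a b /=; rewrite negbK. Qed.

Lemma step_odd x y m : CM x y (m.*2.+2) = (CM x y (m.*2.+1) *m mx2 1 (y m.+1) 0 1)%R.
Proof.
apply/matrixP => i j; rewrite !mxE !big_ord_recr big_ord0 !mxE cntS.
rewrite /srcN /tgtN size_newA /= odd_double /=.
case: i => [[|[|//]] Hi]; case: j => [[|[|//]] Hj]; rewrite /vtx /= ?doubleK.
all: lia.
Qed.

Lemma step_even x y m : CM x y (m.*2.+1) = (CM x y (m.*2) *m mx2 1 0 (x m.+1) 1)%R.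
Proof.
apply/matrixP => i j; rewrite !mxE !big_ord_recr big_ord0 !mxE cntS.
rewrite /srcN /tgtN size_newA /= odd_double /=.
case: i => [[|[|//]] Hi]; case: j => [[|[|//]] Hj]; rewrite /vtx /= ?doubleK.
all: lia.
Qed.

Lemma cnt0 x y s t : cnt x y 0 s t = (s == t). Proof. by []. Qed.

Lemma fibs x y m :
  [/\ cnt x y m.*2.+1 1 1 = Fib m.*2.+1 y (shiftS x), cnt x y m.*2.+1 2 1 = Fib m.*2 y (shiftS x),
      cnt x y m.*2.+1 1 2 = Fib m.*2.+2 x y & cnt x y m.*2.+1 2 2 = Fib m.*2.+1 x y].
Proof.
elim: m => [|m [E1 E2 E3 E4]].
  by rewrite !cntS !cnt0 /srcN /tgtN size_newA /Fib /=; split; lia.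
rewrite doubleS !(cntS x y m.*2.+2) !(cntS x y m.*2.+1).
rewrite (fib_rec m.*2.+1 y) (fib_rec m.*2 y) (fib_rec m.*2.+2 x y) (fib_rec m.*2.+1 x y).
rewrite /srcN /tgtN !size_newA /= !odd_double /= !doubleK ?uphalf_double E1 E2 E3 E4.
rewrite [shiftS x m.+1]/shiftS; split; nia.
Qed.

Lemma fibs_even x y m :
  [/\ cnt x y m.*2.+2 1 1 = Fib m.*2.+1 y (shiftS x), cnt x y m.*2.+2 2 1 = Fib m.*2.+2 y (shiftS x),
      cnt x y m.*2.+2 1 2 = Fib m.*2.+2 x y & cnt x y m.*2.+2 2 2 = Fib m.*2.+3 x y].
Proof.
have [E1 E2 E3 E4] := fibs x y m.
rewrite !(cntS x y m.*2.+1).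
rewrite (fib_rec m.*2 y) (fib_rec m.*2.+1 x y).
rewrite /srcN /tgtN !size_newA /= !odd_double /= !doubleK ?uphalf_double E1 E2 E3 E4.
split; nia.
Qed.

Theorem lemma4p1 (x y : nat -> nat)
  (hx : forall i, 0 < i -> 0 < x i) (hy : forall i, 0 < i -> 0 < y i) :
  (forall m, 0 < m ->
     is_cartan m.*2 x y
       (mx2 (Fib m.*2.-1 y (shiftS x)) (Fib m.*2 y (shiftS x))
            (Fib m.*2 x y)             (Fib m.*2.+1 x y))
     /\ (forall C D : 'M[nat]_2, is_cartan m.*2.-1 x y C -> is_cartan m.*2 x y D ->
           D = (C *m mx2 1 (y m) 0 1)%R))
  /\
  (forall m,
     is_cartan m.*2.+1 x y
       (mx2 (Fib m.*2.+1 y (shiftS x)) (Fib m.*2 y (shiftS x))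
            (Fib m.*2.+2 x y)           (Fib m.*2.+1 x y))
     /\ (forall C D : 'M[nat]_2, is_cartan m.*2 x y C -> is_cartan m.*2.+1 x y D ->
           D = (C *m mx2 1 0 (x m.+1) 1)%R)).
Proof.
split.
  case=> [//|m] _; rewrite doubleS /=; split.
    have -> : mx2 (Fib m.*2.+1 y (shiftS x)) (Fib m.*2.+2 y (shiftS x))
                  (Fib m.*2.+2 x y) (Fib m.*2.+3 x y) = CM x y m.*2.+2.
      have [E1 E2 E3 E4] := fibs_even x y m.
      apply/matrixP => i j; rewrite !mxE.
      by case: i => [[|[|//]] Hi]; case: j => [[|[|//]] Hj]; rewrite /vtx /=.
    exact: CM_cartan.
  by move=> C D HC HD; rewrite (cartan_eq HC) (cartan_eq HD) step_odd.
move=> m; split.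
  have -> : mx2 (Fib m.*2.+1 y (shiftS x)) (Fib m.*2 y (shiftS x))
                (Fib m.*2.+2 x y) (Fib m.*2.+1 x y) = CM x y m.*2.+1.
    have [E1 E2 E3 E4] := fibs x y m.
    apply/matrixP => i j; rewrite !mxE.
    by case: i => [[|[|//]] Hi]; case: j => [[|[|//]] Hj]; rewrite /vtx /=.
  exact: CM_cartan.
by move=> C D HC HD; rewrite (cartan_eq HC) (cartan_eq HD) step_even.
Qed.
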